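(* Let $a,a^{\dagger},b,b^{\dagger}$ be linear operators (with $a^{\dagger},b^{\dagger}$ the adjoints of $a,b$) satisfying $\ker a^{\dagger}=\{0\}=\ker b$ and $$[a^{\dagger}a,a^{\dagger}b]=\lambda a^{\dagger}b,\quad [bb^{\dagger},ba^{\dagger}]=\lambda' ba^{\dagger},\quad [a^{\dagger}b,b^{\dagger}a]=\mu a^{\dagger}a+\nu,\quad [ba^{\dagger},ab^{\dagger}]=\mu' aa^{\dagger}+\nu',$$ where $\lambda,\lambda',\nu,\nu'\in\mathbb R$, $\lambda\neq 0$, and $\mu,\mu'$ are constants. Then there exist $\alpha,\beta,\gamma,\delta\in\mathbb R$ such that $b^{\dagger}b=\alpha a^{\dagger}a+\gamma$ and $bb^{\dagger}=\beta aa^{\dagger}+\delta$.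
   Context: $[X,Y]=XY-YX$ denotes the commutator; all identities are understood as operator identities on a suitable common domain. *)

(* Defs.v *)
From mathcomp Require Import all_boot all_order all_algebra.
Set Implicit Arguments. Unset Strict Implicit. Unset Printing Implicit Defensive.
Import Order.TTheory GRing.Theory Num.Theory.
Local Open Scope ring_scope.

Section Defs.
Variables (C : numClosedFieldType) (V : lmodType C).

(* An inner product on V (linear in the first argument, conjugate
   symmetric, positive definite): V is a (pre-)Hilbert space, i.e. the
   common domain on which all operators act. *)
Definition inner_product (ip : V -> V -> C) : Prop :=
  [/\ forall (c : C) (u v w : V), ip (c *: u + v) w = c * ip u w + ip v w,
      forall u v : V, ip u v = (ip v u)^*,
      forall u : V, 0 <= ip u u
    & forall u : V, ip u u = 0 -> u = 0].

Definition is_adjoint (ip : V -> V -> C) (f g : V -> V) : Prop :=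
  forall u v : V, ip (f u) v = ip u (g v).

Definition comm (f g : V -> V) : V -> V := fun v => f (g v) - g (f v).
End Defs.

(* Main.v *)
Require Import Defs.
From mathcomp Require Import all_boot all_order all_algebra.
Import Order.TTheory GRing.Theory Num.Theory.
Local Open Scope ring_scope.

Section Aux.
Variables (C : numClosedFieldType) (V : lmodType C) (ip : V -> V -> C).
Hypothesis hip : inner_product ip.

Lemma ip_lin c u v w : ip (c *: u + v) w = c * ip u w + ip v w.
Proof. by case: hip. Qed.

Lemma ip0l w : ip 0 w = 0.
Proof.
have := ip_lin 1 0 0 w; rewrite scaler0 addr0 mul1r => h.
by apply: (@addrI _ (ip 0 w)); rewrite addr0 -h.
Qed.

Lemma ipZl c u w : ip (c *: u) w = c * ip u w.
Proof. by have := ip_lin c u 0 w; rewrite addr0 ip0l addr0. Qed.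

Lemma ipDl u v w : ip (u + v) w = ip u w + ip v w.
Proof. by have := ip_lin 1 u v w; rewrite scale1r mul1r. Qed.

Lemma ipNl u w : ip (- u) w = - ip u w.
Proof. by rewrite -scaleN1r ipZl mulN1r. Qed.

Lemma key (P Q : V -> V) (lam k n : C) :
  lam != 0 -> lam \is Num.real -> n \is Num.real ->
  (forall v, 0 <= ip (P v) v) -> (forall v, 0 <= ip (Q v) v) ->
  (forall v, ip (Q v) v = 0 -> Q v = 0) ->
  (forall v, lam *: P v = - (k *: Q v) - n *: v) ->
  exists al ga : C, [/\ al \is Num.real, ga \is Num.real &
     forall v, P v = al *: Q v + ga *: v].
Proof.
move=> l0 lr nr Pp Qp Q0 E.
have EP v : P v = lam^-1 *: (- (k *: Q v) - n *: v).
  by rewrite -E scalerA mulVf // scale1r.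
case: (boolP (k \is Num.real)) => kr.
  exists (- k / lam), (- n / lam); split.
  - by rewrite rpredM ?rpredN ?rpredV.
  - by rewrite rpredM ?rpredN ?rpredV.
  move=> v; rewrite EP scalerDr !scalerN !scalerA.
  by rewrite -!scaleNr !mulNr !(mulrC lam^-1).
have QZ v : Q v = 0.
  apply: Q0; apply/eqP; apply: contraNT kr => q0.
  have := congr1 (fun x => ip x v) (E v).
  rewrite /= ipZl ipDl !ipNl !ipZl => h.
  have -> : k = - (lam * ip (P v) v + n * ip v v) / ip (Q v) v.
    by rewrite h subrK opprK mulfK.
  have r1 := ger0_real (Pp v); have r2 := ger0_real (Qp v).
  have r3 : ip v v \is Num.real by apply: ger0_real; case: hip.
  by rewrite rpredM ?rpredN ?rpredV ?rpredD ?rpredM.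
exists 0, (- n / lam); split.
- exact: rpred0.
- by rewrite rpredM ?rpredN ?rpredV.
move=> v; rewrite EP QZ !scaler0 oppr0 !add0r.
by rewrite scalerN scalerA -scaleNr mulNr mulrC.
Qed.
End Aux.

Lemma lin3 (W : zmodType) (X Y Z A B : W) : X - (X + Y + Z) = A + B -> Z = - (A + Y) - B.
Proof.
rewrite -addrA opprD addrA subrr add0r => h.
by rewrite opprD -addrA (addrC (- Y)) addrA -opprD -h opprK addrC addKr.
Qed.


Theorem theorem2 (C : numClosedFieldType) (V : lmodType C) (ip : V -> V -> C)
    (a ad b bd : {linear V -> V}) (lam lam' mu mu' nu nu' : C) :
  inner_product ip ->
  is_adjoint ip a ad -> is_adjoint ip b bd ->
  (forall v, ad v = 0 -> v = 0) -> (forall v, b v = 0 -> v = 0) ->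
  lam \is Num.real -> lam' \is Num.real -> nu \is Num.real -> nu' \is Num.real ->
  lam != 0 ->
  comm (ad \o a) (ad \o b) =1 (fun v => lam *: ad (b v)) ->
  comm (b \o bd) (b \o ad) =1 (fun v => lam' *: b (ad v)) ->
  comm (ad \o b) (bd \o a) =1 (fun v => mu *: ad (a v) + nu *: v) ->
  comm (b \o ad) (a \o bd) =1 (fun v => mu' *: a (ad v) + nu' *: v) ->
  exists al be ga de : C,
    [/\ al \is Num.real, be \is Num.real, ga \is Num.real & de \is Num.real] /\
    (forall v, bd (b v) = al *: ad (a v) + ga *: v) /\
    (forall v, b (bd v) = be *: a (ad v) + de *: v).
Proof.
move=> hip Aa Ab kad kb lr l'r nr n'r l0 H1 H2 H3 H4.
have E1 v : a (ad (b v)) = b (ad (a v)) + lam *: b v.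
  apply/eqP; rewrite -subr_eq0; apply/eqP; apply: kad.
  have := H1 v; rewrite /comm /= => h.
  by rewrite !linearB /= linearD linearZ /= opprD addrA h subrr.
have E2 v : bd (b (ad v)) = ad (b (bd v)) + lam' *: ad v.
  apply/eqP; rewrite -subr_eq0; apply/eqP; apply: kb.
  have := H2 v; rewrite /comm /= => h.
  by rewrite !linearB /= linearD linearZ /= opprD addrA h subrr.
have F1 v : lam *: bd (b v) = - ((mu + lam') *: ad (a v)) - nu *: v.
  have := H3 v; rewrite /comm /= E1 linearD linearZ /= E2 => /lin3 ->.
  by rewrite scalerDl.
have F2 v : lam *: b (bd v) = - ((mu' + lam') *: a (ad v)) - nu' *: v.
  have := H4 v; rewrite /comm /= E2 linearD linearZ /= E1 (addrAC _ (lam *: _)) => /lin3 ->.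
  by rewrite scalerDl.
have [ipl ipc ipp ipd] := hip.
have P1 : forall v, 0 <= ip (bd (b v)) v.
  move=> v /=; rewrite ipc -Ab conjC_ge0; exact: ipp.
have Q1 : forall v, 0 <= ip (ad (a v)) v.
  move=> v /=; rewrite ipc -Aa conjC_ge0; exact: ipp.
have Z1 : forall v, ip (ad (a v)) v = 0 -> ad (a v) = 0.
  move=> v /= h; have : ip (a v) (a v) = 0 by apply/eqP; rewrite -conjC_eq0 Aa -ipc h.
  by move/ipd ->; rewrite linear0.
have [al [ga [alr gar Eal]]] := @key C V ip hip (fun v => bd (b v)) (fun v => ad (a v)) lam (mu + lam') nu l0 lr nr P1 Q1 Z1 F1.
have P2 : forall v, 0 <= ip (b (bd v)) v.
  move=> v /=; rewrite Ab; exact: ipp.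
have Q2 : forall v, 0 <= ip (a (ad v)) v.
  move=> v /=; rewrite Aa; exact: ipp.
have Z2 : forall v, ip (a (ad v)) v = 0 -> a (ad v) = 0.
  move=> v /=; rewrite Aa => /ipd ->; exact: linear0.
have [be [de [ber der Ebe]]] := @key C V ip hip (fun v => b (bd v)) (fun v => a (ad v)) lam (mu' + lam') nu' l0 lr n'r P2 Q2 Z2 F2.
by exists al, be, ga, de.
Qed.
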